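(* Consider problem (P) under Assumptions (A1)–(A3) and run the SMIL algorithm with tolerance $\varepsilon\ge 0$. Then at every iteration $k$ at which the algorithm has not terminated, the backtracking loop (step S4) is executed only finitely many times: after finitely many reductions $\Delta_k\leftarrow\kappa\Delta_k$, either the algorithm terminates at step S3 or the sufficient decrease condition $a_k\ge\varrho\Psi_k$ holds, so that the trial point $x^{k+1}$ is accepted.
   Context: Problem (P): minimize $f(x)$ subject to $x\in\mathcal{X}:=\bar{\mathcal{X}}\cap\{x\in\mathbb{R}^n : x_i\in\mathbb{Z}\ \forall i\in\mathcal{I}\}$, with $\bar{\mathcal{X}}\subseteq\mathbb{R}^n$ a closed convex polyhedral set, $\mathcal{I}\subseteq\{1,\dots,n\}$, $\mathcal{X}\ne\emptyset$, $f:\mathbb{R}^n\to\mathbb{R}$. Write $x=(u,z)$ with $u$ the components with indices not in $\mathcal{I}$ and $z$ those in $\mathcal{I}$. Assumptions: (A1) $f$ is $C^1$ with locally Lipschitz gradient; (A2) $f(u,z)=f_1(u)+\langle f_2,z\rangle$; (A3) the feasible integer parts $\{z:(u,z)\in\mathcal{X}\}$ form a bounded set. $\|x\|_{PL}$ is the $\ell_1$- or $\ell_\infty$-norm of the components with indices not in $\mathcal{I}$; $\mathbb{B}_{PL}(x,\Delta):=\{w:\|w-x\|_{PL}\le\Delta\}$. SMIL algorithm. Input $x^0\in\mathcal{X}$, $\varepsilon\ge0$; parameters $\Delta_0>0$, $\varrho,\kappa\in(0,1)$, $\kappa_m\in(0,1]$. Set $m_0:=f(x^0)$. For $k=0,1,2,\dots$: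 (S1) compute $x^{k+1}\in\arg\min\{\langle\nabla f(x^k),x\rangle : x\in\mathcal{X}\cap\mathbb{B}_{PL}(x^k,\Delta_k)\}$; (S2) set $a_k:=m_k-f(x^{k+1})$ and $\Psi_k:=\langle\nabla f(x^k),x^k-x^{k+1}\rangle$; (S3) if $\Psi_k\le\varepsilon$, return $x^k$; (S4) if $a_k<\varrho\Psi_k$, set $\Delta_k\leftarrow\kappa\Delta_k$ and go back to (S1) (backtracking); (S5) set $m_{k+1}:=(1-\kappa_m)m_k+\kappa_m f(x^{k+1})$; (S6) choose $\Delta_{k+1}$ either by the rule $\Delta_{k+1}=\kappa\Delta_k$ if $\rho_k<\varrho_1$, $\Delta_{k+1}=\Delta_k$ if $\varrho_1\le\rho_k<\varrho_2$, $\Delta_{k+1}=\Delta_k/\kappa$ if $\rho_k\ge\varrho_2$, where $\rho_k:=a_k/\Psi_k$ and $\varrho\le\varrho_1<\varrho_2<1$; or by a reset $\Delta_{k+1}\in[\Delta_{\min},\Delta_{\max}]$ with $0<\Delta_{\min}\le\Delta_{\max}$. *)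

(* Defs.v *)
From HB Require Import structures.
From mathcomp Require Import all_boot all_order all_algebra.
From mathcomp Require Import all_classical all_reals all_analysis.
Set Implicit Arguments. Unset Strict Implicit. Unset Printing Implicit Defensive.
Import Order.TTheory GRing.Theory Num.Theory.
Import numFieldNormedType.Exports.
Local Open Scope ring_scope.

Section SMIL.
Variables (R : realType) (n p : nat).
Variables (A : 'M[R]_(p, n)) (b : 'cV[R]_p).
Variable (I : {set 'I_n}).
(* l1 = true : ||.||_PL is the l1-norm of the continuous part; false : l_inf *)
Variable (l1 : bool).

Definition dotv (u v : 'rV[R]_n) : R := \sum_(i < n) u 0 i * v 0 i.

Definition inXbar (x : 'rV[R]_n) : Prop :=
  forall i : 'I_p, \sum_(j < n) A i j * x 0 j <= b i 0.

Definition inX (x : 'rV[R]_n) : Prop :=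
  inXbar x /\ (forall i, i \in I -> x 0 i \is a Num.int).

Definition normPL (x : 'rV[R]_n) : R :=
  if l1 then \sum_(i < n | i \notin I) `|x 0 i|
  else \big[Num.max/0]_(i < n | i \notin I) `|x 0 i|.

(* x = (u, z): the continuous part u, with the integer components zeroed *)
Definition upart (x : 'rV[R]_n) : 'rV[R]_n :=
  \row_(i < n) (if i \in I then 0 else x 0 i).

Variables (f : 'rV[R]_n -> R) (g : 'rV[R]_n -> 'rV[R]_n).
(* g plays the role of the gradient of f (see hypotheses of mainTheorem4) *)

Definition subfeas (x : 'rV[R]_n) (D : R) (y : 'rV[R]_n) : Prop :=
  inX y /\ normPL (y - x) <= D.

Definition is_subsol (x : 'rV[R]_n) (D : R) (y : 'rV[R]_n) : Prop :=
  subfeas x D y /\ forall w, subfeas x D w -> dotv (g x) y <= dotv (g x) w.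

Definition Psi (x y : 'rV[R]_n) : R := dotv (g x) (x - y).

Variables (x0 : 'rV[R]_n) (eps Delta0 rho kappa kappam rho1 rho2 Dmin Dmax : R).

(* step S6: admissible choices of Delta_{k+1} from Delta_k (after backtracking),
   a_k and Psi_k *)
Definition delta_update (Dk ak Psik Dn : R) : Prop :=
  let rk := ak / Psik in
  (rk < rho1 /\ Dn = kappa * Dk)
  \/ (rho1 <= rk < rho2 /\ Dn = Dk)
  \/ (rho2 <= rk /\ Dn = Dk / kappa)
  \/ (Dmin <= Dn <= Dmax).

(* reachable x m D : (x^k, m_k, Delta_k) is the state at the start of some
   iteration k of a run of SMIL that has not terminated before iteration k. *)
Inductive smil_reachable : 'rV[R]_n -> R -> R -> Prop :=
| smil_init : smil_reachable x0 (f x0) Delta0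
| smil_step (x : 'rV[R]_n) (m D : R) (j : nat) (y : 'rV[R]_n) (Dn : R) :
    smil_reachable x m D ->
    (* j backtracking steps (S4) were performed, each with a rejected trial *)
    (forall i : nat, (i < j)%N -> exists y', is_subsol x (kappa ^+ i * D) y'
        /\ eps < Psi x y' /\ m - f y' < rho * Psi x y') ->
    is_subsol x (kappa ^+ j * D) y ->
    eps < Psi x y ->
    rho * Psi x y <= m - f y ->
    delta_update (kappa ^+ j * D) (m - f y) (Psi x y) Dn ->
    smil_reachable y ((1 - kappam) * m + kappam * f y) Dn.

End SMIL.

(* Main.v *)
From HB Require Import structures.
From mathcomp Require Import all_boot all_order all_algebra.
From mathcomp Require Import all_classical all_reals all_analysis.
From mathcomp Require Import ring lra.
Require Import Defs.
Import Order.TTheory GRing.Theory Num.Theory.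
Import numFieldNormedType.Exports.
Local Open Scope ring_scope.
From mathcomp Require Import zify.
Set Implicit Arguments.

Section H.
Variables (R : realType) (n : nat) (I : {set 'I_n}) (l1 : bool).

Lemma normPL_ge (v : 'rV[R]_n) i : i \notin I -> `|v 0 i| <= normPL I l1 v.
Proof.
move=> iI; rewrite /normPL; case: l1.
  rewrite (bigD1 i) //= lerDl; apply: sumr_ge0 => *; exact: normr_ge0.
rewrite (bigD1 i) //= le_max lexx //.
Qed.

Lemma normPL_ge0 (v : 'rV[R]_n) : 0 <= normPL I l1 v.
Proof.
rewrite /normPL; case: l1.
  apply: sumr_ge0 => *; exact: normr_ge0.
elim/big_ind: _ => //= a b Ha Hb; by rewrite le_max Ha.
Qed.

Lemma normPL_le (v w : 'rV[R]_n) t : 0 <= t ->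
  (forall i, i \notin I -> `|v 0 i| <= t * `|w 0 i|) ->
  normPL I l1 v <= t * normPL I l1 w.
Proof.
move=> t0 H; have := normPL_ge0 w; have := @normPL_ge w.
rewrite /normPL; case: l1.
  move=> _ _; rewrite mulr_sumr; apply: ler_sum => i; exact: H.
set N := (X in _ -> _ -> _ <= _ * X) => Hge N0.
elim/big_ind: _ => //=.
- exact: mulr_ge0.
- by move=> a b Ha Hb; rewrite ge_max Ha Hb.
move=> i iI; apply: (le_trans (H i iI)); apply: ler_wpM2l => //; exact: Hge.
Qed.


Lemma dotvD (u v w : 'rV[R]_n) : dotv u (v + w) = dotv u v + dotv u w.
Proof. rewrite /dotv -big_split; apply: eq_bigr => i _; by rewrite mxE mulrDr. Qed.
Lemma dotvZ (u v : 'rV[R]_n) a : dotv u (a *: v) = a * dotv u v.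
Proof. rewrite /dotv mulr_sumr; apply: eq_bigr => i _; by rewrite mxE mulrCA. Qed.
Lemma dotvN (u v : 'rV[R]_n) : dotv u (- v) = - dotv u v.
Proof. by rewrite -scaleN1r dotvZ mulN1r. Qed.
Lemma dotvB (u v w : 'rV[R]_n) : dotv u (v - w) = dotv u v - dotv u w.
Proof. by rewrite dotvD dotvN. Qed.
Lemma dotv_le (u v : 'rV[R]_n) c : 
  (forall i, `|v 0 i| <= c) -> `|dotv u v| <= (\sum_i `|u 0 i|) * c.
Proof.
move=> H; rewrite /dotv mulr_suml; apply: (le_trans (ler_norm_sum _ _ _)).
apply: ler_sum => i _; rewrite normrM; apply: ler_wpM2l => //.
Qed.
End H.

Lemma pigeon (T : finType) (s : nat -> T) :
  exists t, forall N, exists2 k, (N <= k)%N & s k = t.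
Proof.
apply: boolp.contrapT => H.
have H' : forall t, exists N, forall k, (N <= k)%N -> s k <> t.
  move=> t; apply: boolp.contrapT => Ht; apply: H; exists t => N.
  apply: boolp.contrapT => HN; apply: Ht; exists N => k Nk Ek; apply: HN.
  by exists k.
have [F HF] := boolp.choice H'.
pose M := (\max_t F t)%N.
by apply: (HF (s M) M) => //; apply: leq_bigmax.
Qed.

Definition keyv (R : realType) n (K : nat) (y : 'rV[R]_n) : {ffun 'I_n -> 'I_(K + K).+1} :=
  [ffun i => inord (absz (Num.floor (y 0 i) + K%:Z))].

Arguments keyv {R n}.
Lemma keyv_inj (R : realType) n (I : {set 'I_n}) (K : nat) (y y' : 'rV[R]_n) :
  (forall i, i \in I -> y 0 i \is a Num.int /\ `|y 0 i| <= K%:R) ->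
  (forall i, i \in I -> y' 0 i \is a Num.int /\ `|y' 0 i| <= K%:R) ->
  keyv K y = keyv K y' -> forall i, i \in I -> y 0 i = y' 0 i.
Proof.
move=> Hy Hy' E i iI.
have bnd : forall x : R, `|x| <= K%:R -> (- K%:Z <= Num.floor x <= K%:Z)%R.
  move=> x; rewrite ler_norml => /andP[h1 h2]; apply/andP; split.
    by rewrite floor_ge_int rmorphN /=.
  by rewrite -(ler_int R); apply: le_trans (floor_le _) h2.
have := congr1 (fun f : {ffun _ -> _} => nat_of_ord (f i)) E; rewrite /keyv !ffunE /=.
have [yi Ky] := Hy i iI; have [yi' Ky'] := Hy' i iI.
have := bnd _ Ky; have := bnd _ Ky'.
set a := Num.floor (y 0 i); set a' := Num.floor (y' 0 i).
move=> B' B.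
rewrite !inordK; last first.
- lia.
- lia.
move=> Ea.
have : a = a' by lia.
by rewrite -(floorK yi) -(floorK yi') /a /a' => ->.
Qed.

Lemma reach_inv (R : realType) (n p : nat) (A : 'M[R]_(p, n)) (b : 'cV[R]_p)
  (I : {set 'I_n}) (l1 : bool)
  (f : 'rV[R]_n -> R) (g : 'rV[R]_n -> 'rV[R]_n)
  (x0 : 'rV[R]_n) (eps Delta0 rho kappa kappam rho1 rho2 Dmin Dmax : R) :
  inX A b I x0 -> 0 <= eps -> 0 < rho -> 0 < kappam <= 1 ->
  forall x m D,
    smil_reachable A b I l1 f g x0 eps Delta0 rho kappa kappam rho1 rho2 Dmin Dmax x m D ->
    inX A b I x /\ f x <= m.
Proof.
move=> Hx0 He Hr /andP[Hk1 Hk2] x m D; elim => [|{}x {}m {}D j y Dn _ [IH1 IH2] _ Hy Hpsi Hdec _].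
  by split.
split; first by case: Hy => [[]].
have : 0 < rho * Psi g x y by apply: mulr_gt0 => //; apply: le_lt_trans Hpsi.
move=> H0.
have fym : f y <= m by lra.
nra.
Qed.

Lemma diff_bound (R : realType) n (f : 'rV[R]_n -> R) x :
  differentiable f x -> forall e : R, 0 < e -> exists d : R, 0 < d /\
   forall h, `|h| < d -> `|f (h + x) - f x - 'd f x h| <= e * `|h|.
Proof.
move=> Hd e e0.
have /eqaddoP Ho := diff_locally Hd.
have := Ho e e0.
move=> /nbhs_ballP [d d0 Hb]; exists d; split => // h hd.
have : ball (0 : 'rV[R]_n) d h by rewrite -ball_normE /ball_ /= sub0r normrN.
move=> /Hb /=; by rewrite !fctE opprD addrA.
Qed.

Lemma rnorm_le (R : realType) n (v : 'rV[R]_n) c : 0 <= c -> (forall i, `|v 0 i| <= c) -> `|v| <= c.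
Proof.
move=> c0 H; case: (eqVneq (mx_norm v) 0) => [E|].
  by change (mx_norm v <= c); rewrite E.
move=> /mx_norm_neq0 [[i j] E]; change (mx_norm v <= c); rewrite E /=.
by rewrite (ord1 i); apply: H.
Qed.

Lemma dotv_delta (R : realType) n (u : 'rV[R]_n) i : dotv u (delta_mx 0 i) = u 0 i.
Proof.
rewrite /dotv (bigD1 i) //= big1 ?addr0; first by rewrite mxE !eqxx mulr1.
by move=> j ji; rewrite mxE (negbTE ji) andbF mulr0.
Qed.

Lemma grad_I (R : realType) n (I : {set 'I_n}) (f : 'rV[R]_n -> R) g f1 (f2 : 'rV[R]_n) x :
  differentiable f x -> (forall h, 'd f x h = dotv (g x) h) ->
  (forall x, f x = f1 (upart I x) + \sum_(i < n | i \in I) f2 0 i * x 0 i) ->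
  forall i, i \in I -> g x 0 i = f2 0 i.
Proof.
move=> Hd Hdf HA i iI.
have key : forall t, f (t *: delta_mx 0 i + x) - f x = t * f2 0 i.
  move=> t; rewrite !HA.
  have -> : upart I (t *: delta_mx 0 i + x) = upart I x.
    apply/rowP => j; rewrite !mxE; case: ifP => // jI.
    by rewrite (_ : (j == i) = false) ?andbF ?mulr0 ?add0r //; apply/negbTE; apply: contraFN jI => /eqP ->.
  rewrite (bigD1 i) //= [X in _ - (_ + X)](bigD1 i) //= !mxE !eqxx /= mulr1.
  rewrite (eq_bigr (fun j => f2 0 j * x 0 j)); last first.
    by move=> j /andP[_ ji]; rewrite !mxE (negbTE ji) andbF mulr0 add0r.
  ring.
apply/eqP; rewrite -subr_eq0 -normr_le0.
apply/ler_addgt0Pr => e e0; rewrite add0r.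
have [d [d0 Hb]] := diff_bound Hd e e0.

pose t := d / 2.
have t0 : 0 < t by rewrite /t divr_gt0.
have hn : `|t *: (delta_mx 0 i : 'rV[R]_n)| <= t.
  apply: rnorm_le; first exact: ltW.
  move=> j; rewrite !mxE normrM ger0_norm ?(ltW t0) //.
  by case: (_ && _); rewrite /= ?normr1 ?normr0 ?mulr1 ?mulr0 // ltW.
have ht : t < d by rewrite /t; lra.
have := Hb (t *: delta_mx 0 i) (le_lt_trans hn ht).
rewrite key Hdf dotvZ dotv_delta -mulrBr normrM ger0_norm ?(ltW t0) // => H.
have : t * `|f2 0 i - g x 0 i| <= t * e by apply: (le_trans H); rewrite [t * e]mulrC; apply: ler_wpM2l => //; exact: ltW.
rewrite ler_pM2l // distrC //.
Qed.

Lemma geom_small (R : realType) (k : R) (e : R) : 0 <= k < 1 -> 0 < e ->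
  exists N : nat, k ^+ N < e.
Proof.
move=> /andP[k0 k1] e0.
have := @cvg_expr R k; rewrite ger0_norm // => /(_ k1).
move=> /cvgrPdist_lt /(_ e e0) [N _ HN]; exists N.
have := HN N (leqnn N); rewrite /= sub0r normrN ger0_norm //.
exact: exprn_ge0.
Qed.

Lemma decomp (R : realType) n (I : {set 'I_n}) (f : 'rV[R]_n -> R) (g : 'rV[R]_n -> 'rV[R]_n) f1 (f2 : 'rV[R]_n) x y :
  (forall x, f x = f1 (upart I x) + \sum_(i < n | i \in I) f2 0 i * x 0 i) ->
  (forall i, i \in I -> g x 0 i = f2 0 i) ->
  f x - f y - Psi g x y =
  - (f (\row_i (if i \in I then 0 else y 0 i - x 0 i) + x) - f x
     - dotv (g x) (\row_i (if i \in I then 0 else y 0 i - x 0 i))).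
Proof.
move=> HA Hg; set h := \row_i _.
have E1 : f (h + x) - f y = \sum_(i < n | i \in I) g x 0 i * (x 0 i - y 0 i).
  rewrite !HA (_ : upart I (h + x) = upart I y); last first.
    apply/rowP => i; rewrite !mxE; case: ifP => // iI; by rewrite iI subrK.
  under eq_bigr => i iI do rewrite !mxE iI add0r.
  rewrite opprD addrACA subrr add0r -sumrB; apply: eq_bigr => i iI.
  by rewrite Hg // mulrBr.
have E2 : Psi g x y = \sum_(i < n | i \in I) g x 0 i * (x 0 i - y 0 i)
                    + \sum_(i < n | i \notin I) g x 0 i * (x 0 i - y 0 i).
  rewrite /Psi /dotv (bigID (fun i => i \in I)) /=.
  by congr (_ + _); apply: eq_bigr => i _; rewrite !mxE.
have E3 : dotv (g x) h = - \sum_(i < n | i \notin I) g x 0 i * (x 0 i - y 0 i).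
  rewrite /dotv (bigID (fun i => i \in I)) /= big1 ?add0r; last first.
    by move=> i iI; rewrite mxE iI mulr0.
  rewrite -sumrN; apply: eq_bigr => i iI; rewrite mxE (negbTE iI).
  by rewrite -mulrN opprB.
rewrite E2 E3 -E1; lra.
Qed.

Lemma rowdot (R : realType) n p (A : 'M[R]_(p, n)) i (x : 'rV[R]_n) :
  \sum_(j < n) A i j * x 0 j = dotv (row i A) x.
Proof. by rewrite /dotv; apply: eq_bigr => j _; rewrite mxE. Qed.

Lemma vanish (R : realType) (kappa D a C : R) (P : nat -> Prop) :
  0 <= kappa < 1 -> 0 <= D -> 0 <= C ->
  (forall N, exists2 k, (N <= k)%N & P k) ->
  (forall k, P k -> a <= C * (kappa ^+ k * D)) -> a <= 0.
Proof.
move=> /andP[k0 k1] D0 C0 HP Ha; rewrite leNgt; apply/negP => a0.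
have e0 : 0 < a / (C * D + 1).
  by apply: divr_gt0 => //; apply: ltr_wpDl => //; apply: mulr_ge0.
have hk : 0 <= kappa < 1 by rewrite k0 k1.
have [N HN] := @geom_small R kappa _ hk e0.
have [k Nk Pk] := HP N.
have := Ha k Pk.
have kk : kappa ^+ k <= kappa ^+ N by apply: ler_wiXn2l => //; exact: ltW.
have kN0 : 0 <= kappa ^+ k by apply: exprn_ge0.
have CD0 : 0 <= C * D by apply: mulr_ge0.
have HN' : kappa ^+ N * (C * D + 1) < a.
  by rewrite -ltr_pdivlMr // ltr_wpDl.
nra.
Qed.

Theorem mainTheorem4 (R : realType) (n p : nat) (A : 'M[R]_(p, n)) (b : 'cV[R]_p)
  (I : {set 'I_n}) (l1 : bool)
  (f : 'rV[R]_n -> R) (g : 'rV[R]_n -> 'rV[R]_n)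
  (x0 : 'rV[R]_n) (eps Delta0 rho kappa kappam rho1 rho2 Dmin Dmax : R)
  (* (A1): f is C^1 with gradient g, and g is locally Lipschitz *)
  (Hdiff : forall x : 'rV[R]_n,
     differentiable f x /\ forall h : 'rV[R]_n, 'd f x h = dotv (g x) h)
  (Hcont : continuous g)
  (Hlip : forall x : 'rV[R]_n, exists r : R, 0 < r /\ exists L : R,
     forall y z : 'rV[R]_n, `|y - x| < r -> `|z - x| < r ->
       `|g y - g z| <= L * `|y - z|)
  (* (A2): f(u, z) = f1(u) + <f2, z> *)
  (HA2 : exists (f1 : 'rV[R]_n -> R) (f2 : 'rV[R]_n),
     forall x, f x = f1 (upart I x) + \sum_(i < n | i \in I) f2 0 i * x 0 i)
  (* (A3): the integer parts of feasible points form a bounded set *)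
  (HA3 : exists M : R, forall x, inX A b I x -> forall i, i \in I -> `|x 0 i| <= M)
  (* input and parameters *)
  (Hx0 : inX A b I x0) (Heps : 0 <= eps) (HD0 : 0 < Delta0)
  (Hrho : 0 < rho < 1) (Hkappa : 0 < kappa < 1) (Hkm : 0 < kappam <= 1)
  (Hrho12 : rho <= rho1 /\ rho1 < rho2 /\ rho2 < 1)
  (HDminmax : 0 < Dmin /\ Dmin <= Dmax) :
  (* at any (non-terminated) iteration k with state (x^k, m_k, Delta_k) ... *)
  forall (x : 'rV[R]_n) (m D : R),
    smil_reachable A b I l1 f g x0 eps Delta0 rho kappa kappam rho1 rho2 Dmin Dmax x m D ->
  (* ... and for any choice of subproblem solutions during backtracking
     (sel j = trial point after j reductions of Delta_k) ... *)
  forall sel : nat -> 'rV[R]_n,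
    (forall j : nat, is_subsol A b I l1 g x (kappa ^+ j * D) (sel j)) ->
  (* ... after finitely many reductions, S3 terminates or the trial is accepted *)
  exists j : nat,
    Psi g x (sel j) <= eps \/ rho * Psi g x (sel j) <= m - f (sel j).
Proof.
move=> x m D Hreach sel Hsel.
case/andP: Hrho => hr0 hr1.
case/andP: Hkappa => hk0 hk1.
have [Hx Hfm] := reach_inv Hx0 Heps hr0 Hkm Hreach.
have [f1 [f2 HA]] := HA2.
have HgI : forall i, i \in I -> g x 0 i = f2 0 i.
  by move=> i iI; exact: (grad_I g f1 f2 (Hdiff x).1 (Hdiff x).2 HA iI).
apply: boolp.contrapT => Hno.
pose P j := Psi g x (sel j).
have Hrej : forall j, eps < P j /\ m - f (sel j) < rho * P j.
  move=> j; split; rewrite ltNge; apply/negP => H; apply: Hno; exists j; by [left|right].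
have Hfeas j : inX A b I (sel j) /\ normPL I l1 (sel j - x) <= kappa ^+ j * D.
  exact: (Hsel j).1.
have Hopt j w : subfeas A b I l1 x (kappa ^+ j * D) w -> dotv (g x) (x - w) <= P j.
  rewrite /P /Psi !dotvB; move/(Hsel j).2 => H; lra.
have Hent j i : i \notin I -> `|sel j 0 i - x 0 i| <= kappa ^+ j * D.
  move=> iI; have := normPL_ge R I l1 (sel j - x) i iI; rewrite !mxE => H.
  exact: le_trans H (Hfeas j).2.
have D0 : 0 <= D.
  have := (Hfeas 0%N).2; rewrite expr0 mul1r; apply: le_trans; exact: normPL_ge0.
have rk0 k : 0 <= kappa ^+ k * D by apply: mulr_ge0 => //; apply: exprn_ge0; exact: ltW.
pose h j : 'rV[R]_n := \row_i (if i \in I then 0 else sel j 0 i - x 0 i).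
have Hdec j : (1 - rho) * P j < `|f (h j + x) - f x - dotv (g x) (h j)|.
  have E := decomp R f g f1 f2 x (sel j) HA HgI.
  have [_ H2] := Hrej j.
  set Q := f (h j + x) - f x - dotv (g x) (h j).
  have := ler_norm Q; rewrite /P in H2 *; rewrite -/(h j) -/Q in E; lra.
have Hhn j : `|h j| <= kappa ^+ j * D.
  apply: rnorm_le => // i; rewrite mxE; case: ifP => iI; first by rewrite normr0.
  exact: Hent (negbT iI).
have [DZ|DN] := eqVneq D 0.
  have [d [d0 Hb]] := diff_bound (Hdiff x).1 1 ltr01.
  have h0 : `|h 0%N| <= 0 by have := Hhn 0%N; rewrite DZ mulr0.
  have := Hb (h 0%N) (le_lt_trans h0 d0); rewrite (Hdiff x).2 mul1r => Hb0.
  have := Hdec 0%N; have [H1 _] := Hrej 0%N.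
  have P0 : 0 < P 0%N by apply: le_lt_trans H1.
  move=> H; have : (1 - rho) * P 0%N < 0 by apply: lt_le_trans H (le_trans Hb0 h0).
  have : 0 < (1 - rho) * P 0%N by apply: mulr_gt0 => //; lra.
  lra.
have Dpos : 0 < D by rewrite lt_def DN D0.
have [M HM] := HA3.
pose K := (Num.truncn M).+1.
have MK : M <= K%:R by apply: ltW; exact: truncnS_gt.
have Hbnd j : forall i, i \in I -> sel j 0 i \is a Num.int /\ `|sel j 0 i| <= K%:R.
  move=> i iI; have [[_ Hint] _] := Hfeas j; split; first exact: Hint.
  apply: le_trans MK; exact: HM (Hfeas j).1 i iI.
have [t0 Ht0] := @pigeon _ (fun j => keyv K (sel j)).
have [k1 _ Hk1] := Ht0 0%N.
have HS k : keyv K (sel k) = t0 -> forall i, i \in I -> sel k 0 i = sel k1 0 i.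
  move=> Sk i iI; apply: (keyv_inj (Hbnd k) (Hbnd k1)) => //.
  by rewrite Sk Hk1.
pose w : 'rV[R]_n := \row_i (if i \in I then sel k1 0 i else x 0 i).
have Hwent k : keyv K (sel k) = t0 -> forall i, `|(w - sel k) 0 i| <= kappa ^+ k * D.
  move=> Sk i; rewrite !mxE; case: ifP => iI.
    by rewrite (HS k Sk i iI) subrr normr0.
  by rewrite distrC; apply: Hent; rewrite iI.
have hk : 0 <= kappa < 1 by rewrite ltW.
have Hwbar : inXbar A b w.
  move=> q; rewrite rowdot; rewrite -subr_le0.
  apply: (@vanish R kappa D _ (\sum_j `|row q A 0 j|) _ hk D0 _ Ht0).
    by apply: sumr_ge0 => *; exact: normr_ge0.
  move=> k Sk; have Hk := (Hfeas k).1.1 q; rewrite rowdot in Hk.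
  have := @dotv_le R n (row q A) _ _ (Hwent k Sk).
  rewrite dotvB => Hn; have := ler_norm (dotv (row q A) w - dotv (row q A) (sel k)).
  lra.
have Hw : inX A b I w.
  split => // i iI; rewrite mxE iI; exact: (Hbnd k1 i iI).1.
pose B := dotv (g x) (x - w).
have B0 : 0 <= B.
  rewrite -oppr_le0.
  apply: (@vanish R kappa D _ (\sum_j `|g x 0 j|) _ hk D0 _ Ht0).
    by apply: sumr_ge0 => *; exact: normr_ge0.
  move=> k Sk; have [H1 _] := Hrej k.
  have := @dotv_le R n (g x) _ _ (Hwent k Sk).
  rewrite /P /Psi in H1; rewrite /B !dotvB in H1 * => Hn.
  have := ler_norm (dotv (g x) w - dotv (g x) (sel k)).
  lra.
have Hconv k : (k1 <= k)%N -> kappa ^+ (k - k1) * P k1 <= P k.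
  move=> kk.
  pose t := kappa ^+ (k - k1).
  have t0' : 0 <= t by apply: exprn_ge0; exact: ltW.
  have t1 : t <= 1 by apply: exprn_ile1 => //; exact: ltW.
  pose wt : 'rV[R]_n := (1 - t) *: w + t *: sel k1.
  have Hwt : subfeas A b I l1 x (kappa ^+ k * D) wt.
    split; first split.
    - move=> q; rewrite rowdot /wt dotvD !dotvZ.
      have := Hw.1 q; have := (Hfeas k1).1.1 q; rewrite !rowdot => h1 h2.
      have : 0 <= 1 - t by lra.
      nra.
    - move=> i iI; rewrite !mxE iI.
      rewrite (_ : (1 - t) * sel k1 0 i + t * sel k1 0 i = sel k1 0 i); last by ring.
      exact: (Hbnd k1 i iI).1.
    - have Hn : normPL I l1 (wt - x) <= t * normPL I l1 (sel k1 - x).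
        apply: normPL_le => // i iI; rewrite !mxE (negbTE iI).
        rewrite (_ : (1 - t) * x 0 i + t * sel k1 0 i - x 0 i = t * (sel k1 0 i - x 0 i)); last by ring.
        by rewrite normrM ger0_norm.
      apply: (le_trans Hn).
      have := (Hfeas k1).2 => H.
      have -> : kappa ^+ k * D = t * (kappa ^+ k1 * D).
        by rewrite /t mulrA -exprD subnK.
      by apply: ler_wpM2l.
  have := Hopt k wt Hwt.
  have -> : x - wt = (1 - t) *: (x - w) + t *: (x - sel k1).
    by apply/rowP => i; rewrite !mxE; ring.
  rewrite dotvD !dotvZ -/B.
  rewrite /P /Psi.
  have : 0 <= (1 - t) * B by apply: mulr_ge0 => //; lra.
  rewrite /t; lra.
have [Pk1 _] := Hrej k1.
have Pk10 : 0 < P k1 by apply: le_lt_trans Pk1.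
have rk1 : 0 < kappa ^+ k1 * D by apply: mulr_gt0 => //; apply: exprn_gt0.
pose e := (1 - rho) * P k1 / (kappa ^+ k1 * D).
have e0 : 0 < e by apply: divr_gt0 => //; apply: mulr_gt0 => //; lra.
have [d [d0 Hb]] := diff_bound (Hdiff x).1 e e0.
have dD : 0 < d / D by apply: divr_gt0.
have [N HN] := @geom_small R kappa _ hk dD.
pose k := (N + k1)%N.
have k1k : (k1 <= k)%N by rewrite leq_addl.
have rkd : kappa ^+ k * D < d.
  have : kappa ^+ k <= kappa ^+ N.
    apply: ler_wiXn2l; [exact: ltW | exact: ltW | by rewrite /k leq_addr].
  move: HN; rewrite ltr_pdivlMr // => HN H; apply: le_lt_trans HN.
  by apply: ler_wpM2r => //; exact: ltW.
have := Hb (h k) (le_lt_trans (Hhn k) rkd); rewrite (Hdiff x).2 => Hbk.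
have Hek : e * (kappa ^+ k * D) = (1 - rho) * (kappa ^+ (k - k1) * P k1).
  rewrite /e -{1}(subnK k1k) exprD; field.
  by rewrite DN expf_neq0 // gt_eqF.
have := Hdec k; have := Hconv k k1k.
have : e * `|h k| <= e * (kappa ^+ k * D) by apply: ler_wpM2l; [exact: ltW|exact: Hhn].
have : 0 < 1 - rho by lra.
nra.
Qed.
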